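(* Let $\phi(x)=\psi_0(\psi_1(x),\dots,\psi_n(x))$ where $\psi_0(y_1,\dots,y_n)$ is an IPC formula in which each $y_i$ is negative, and each $\psi_i$ ($1\le i\le n$) is an IPC formula in which $x$ is negative (formulas may contain further parameter variables). Then for every Heyting algebra $H$ and valuation $v$ of the parameters, the map $F(h)=[\![\phi]\!]_{(v,h/x)}$ satisfies $F^{n+2}(\bot)=F^{n+1}(\bot)$, i.e. $F^{n+1}(\bot)$ is the least fixed point of $F$.
   Context: An occurrence of a variable is negative in a formula if the path in the syntax tree from the root to it passes through an odd number of nodes labelled by an implication $\chi_1\to\chi_2$ whose successor on the path is $\chi_1$; a variable is negative in a formula if all its occurrences are negative. $(v,h/x)$ extends $v$ by sending $x$ to $h$. *)

(* Defs.v *)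
From mathcomp Require Import all_boot.
Set Implicit Arguments. Unset Strict Implicit. Unset Printing Implicit Defensive.

Record heyting := Heyting {
  hcar :> Type;
  hle : hcar -> hcar -> Prop;
  hbot : hcar;
  htop : hcar;
  hmeet : hcar -> hcar -> hcar;
  hjoin : hcar -> hcar -> hcar;
  himp : hcar -> hcar -> hcar;
  hle_refl : forall a, hle a a;
  hle_trans : forall a b c, hle a b -> hle b c -> hle a c;
  hle_anti : forall a b, hle a b -> hle b a -> a = b;
  hbot_le : forall a, hle hbot a;
  hle_top : forall a, hle a htop;
  hmeetP : forall a b c, hle c (hmeet a b) <-> (hle c a /\ hle c b);
  hjoinP : forall a b c, hle (hjoin a b) c <-> (hle a c /\ hle b c);
  himpP : forall a b c, hle c (himp a b) <-> hle (hmeet c a) b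
}.

(** IPC formulas over propositional variables indexed by nat
    (negation is [Imp f Bot]). *)
Inductive form :=
  | Var of nat
  | Bot
  | Top
  | And of form & form
  | Or of form & form
  | Imp of form & form.

Fixpoint eval (H : heyting) (v : nat -> H) (f : form) : H :=
  match f with
  | Var z => v z
  | Bot => hbot H
  | Top => htop H
  | And a b => hmeet (eval v a) (eval v b)
  | Or a b => hjoin (eval v a) (eval v b)
  | Imp a b => himp (eval v a) (eval v b)
  end.

Definition upd (H : heyting) (v : nat -> H) (x : nat) (h : H) : nat -> H :=
  fun z => if z == x then h else v z.

(** [occ p x f]: x has an occurrence in f whose polarity is p
    (p = true: positive, i.e. an even number of left-of-implication steps;
     p = false: negative, odd number). *)
Fixpoint occ (p : bool) (x : nat) (f : form) : bool :=
  match f with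
  | Var z => p && (z == x)
  | Bot | Top => false
  | And a b | Or a b => occ p x a || occ p x b
  | Imp a b => occ (~~ p) x a || occ p x b
  end.

Definition negative (x : nat) (f : form) : bool := ~~ occ true x f.

Definition occurs (x : nat) (f : form) : bool := occ true x f || occ false x f.

Fixpoint subst n (y : 'I_n -> nat) (psi : 'I_n -> form) (f : form) : form :=
  match f with
  | Var z => match [pick i | y i == z] with Some i => psi i | None => Var z end
  | Bot => Bot
  | Top => Top
  | And a b => And (subst y psi a) (subst y psi b)
  | Or a b => Or (subst y psi a) (subst y psi b)
  | Imp a b => Imp (subst y psi a) (subst y psi b)
  end.

(* Main.v *)
Require Import Defs.
From mathcomp Require Import all_boot.
Set Implicit Arguments. Unset Strict Implicit.

Lemma mle_l (H : heyting) (a b : H) : hle (hmeet a b) a.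
Proof. by have /(hmeetP a b (hmeet a b)) [] := hle_refl (hmeet a b). Qed.
Lemma mle_r (H : heyting) (a b : H) : hle (hmeet a b) b.
Proof. by have /(hmeetP a b (hmeet a b)) [] := hle_refl (hmeet a b). Qed.
Lemma mglb (H : heyting) (a b c : H) : hle c a -> hle c b -> hle c (hmeet a b).
Proof. by move=> h1 h2; apply/hmeetP. Qed.
Lemma jle_l (H : heyting) (a b : H) : hle a (hjoin a b).
Proof. by have /(hjoinP a b (hjoin a b)) [] := hle_refl (hjoin a b). Qed.
Lemma jle_r (H : heyting) (a b : H) : hle b (hjoin a b).
Proof. by have /(hjoinP a b (hjoin a b)) [] := hle_refl (hjoin a b). Qed.
Lemma jlub (H : heyting) (a b c : H) : hle a c -> hle b c -> hle (hjoin a b) c.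
Proof. by move=> h1 h2; apply/hjoinP. Qed.
Lemma mmono (H : heyting) (a b a' b' : H) : hle a a' -> hle b b' -> hle (hmeet a b) (hmeet a' b').
Proof.
move=> h1 h2; apply: mglb; [apply: (hle_trans _ h1)|apply: (hle_trans _ h2)].
  exact: mle_l. exact: mle_r.
Qed.
Lemma jmono (H : heyting) (a b a' b' : H) : hle a a' -> hle b b' -> hle (hjoin a b) (hjoin a' b').
Proof.
move=> h1 h2; apply: jlub; [apply: hle_trans h1 _|apply: hle_trans h2 _].
  exact: jle_l. exact: jle_r.
Qed.
Lemma mp (H : heyting) (a b : H) : hle (hmeet (himp a b) a) b.
Proof. exact: (proj1 (himpP a b (himp a b)) (hle_refl _)). Qed.
Lemma imono (H : heyting) (a b a' b' : H) : hle a' a -> hle b b' -> hle (himp a b) (himp a' b').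
Proof.
move=> h1 h2; apply/himpP; apply: (hle_trans _ h2).
apply: (hle_trans _ (mp a b)); apply: mmono => //; exact: hle_refl.
Qed.
Lemma mC (H : heyting) (a b : H) : hle (hmeet a b) (hmeet b a).
Proof. apply: mglb; [exact: mle_r|exact: mle_l]. Qed.

Lemma meq (H : heyting) (e a a' : H) : hle (hmeet e a) a' -> hle (hmeet e a') a ->
  hmeet e a = hmeet e a'.
Proof.
move=> h1 h2; apply: hle_anti; apply: mglb; by [apply: mle_l|].
Qed.

Lemma meet_op_compat (H : heyting) (e a1 a2 b1 b2 : H) :
  hmeet e a1 = hmeet e a2 -> hmeet e b1 = hmeet e b2 ->
  [/\ hmeet e (hmeet a1 b1) = hmeet e (hmeet a2 b2),
      hmeet e (hjoin a1 b1) = hmeet e (hjoin a2 b2) &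
      hmeet e (himp a1 b1) = hmeet e (himp a2 b2)].
Proof.
have gen: forall a1 a2 b1 b2 : H, hmeet e a1 = hmeet e a2 -> hmeet e b1 = hmeet e b2 ->
  [/\ hle (hmeet e (hmeet a1 b1)) (hmeet a2 b2),
      hle (hmeet e (hjoin a1 b1)) (hjoin a2 b2) &
      hle (hmeet e (himp a1 b1)) (himp a2 b2)].
  move=> x1 x2 y1 y2 ea eb.
  have ha : hle (hmeet e x1) x2 by rewrite ea; exact: mle_r.
  have hb : hle (hmeet e y1) y2 by rewrite eb; exact: mle_r.
  have ha' : hle (hmeet e x2) x1 by rewrite -ea; exact: mle_r.
  split.
  - apply: mglb.
    + apply: (hle_trans _ ha); apply: mmono; [exact: hle_refl|exact: mle_l].
    + apply: (hle_trans _ hb); apply: mmono; [exact: hle_refl|exact: mle_r].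
  - apply: hle_trans (mC _ _) _.
    have: hle (hjoin x1 y1) (himp e (hjoin x2 y2)).
      apply: jlub; apply/himpP; apply: hle_trans (mC _ _) _.
      + apply: hle_trans ha (jle_l _ _).
      + apply: hle_trans hb (jle_r _ _).
    by move/himpP.
  - apply/himpP.
    have h1 : hle (hmeet (hmeet e (himp x1 y1)) x2) (hmeet e y1).
      apply: mglb; first by apply: hle_trans (mle_l _ _) (mle_l _ _).
      apply: (hle_trans _ (mp x1 y1)); apply: mglb.
        by apply: hle_trans (mle_l _ _) (mle_r _ _).
      apply: (hle_trans _ ha'); apply: mglb; first by apply: hle_trans (mle_l _ _) (mle_l _ _).
      exact: mle_r.
    exact: hle_trans h1 hb.
move=> ea eb.
have [m1 j1 i1] := gen _ _ _ _ ea eb.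
have [m2 j2 i2] := gen _ _ _ _ (esym ea) (esym eb).
by split; apply: meq.
Qed.

Lemma eval_compat (H : heyting) (f : form) (e : H) (v1 v2 : nat -> H) :
  (forall z, hmeet e (v1 z) = hmeet e (v2 z)) -> hmeet e (eval v1 f) = hmeet e (eval v2 f).
Proof.
move=> hv; elim: f => //= [a iha b ihb|a iha b ihb|a iha b ihb];
  by have [] := meet_op_compat iha ihb.
Qed.

Lemma eval_mono (H : heyting) (f : form) : forall (v1 v2 : nat -> H),
  (forall z, occ true z f -> hle (v1 z) (v2 z)) ->
  (forall z, occ false z f -> hle (v2 z) (v1 z)) -> hle (eval v1 f) (eval v2 f).
Proof.
elim: f => /= [z|||a iha b ihb|a iha b ihb|a iha b ihb] v1 v2 hp hn.
- by apply: hp; rewrite eqxx.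
- exact: hle_refl.
- exact: hle_refl.
- apply: mmono; [apply: iha|apply: ihb] => z hz; by [apply: hp; rewrite hz ?orbT|apply: hn; rewrite hz ?orbT].
- apply: jmono; [apply: iha|apply: ihb] => z hz; by [apply: hp; rewrite hz ?orbT|apply: hn; rewrite hz ?orbT].
- apply: imono; [apply: iha|apply: ihb] => z hz; by [apply: hp; rewrite hz ?orbT|apply: hn; rewrite hz ?orbT].
Qed.

Lemma abstract_fix (H : heyting) (n : nat) (G : ('I_n -> H) -> H) (f : 'I_n -> H -> H) :
  (forall e z z', (forall i, hmeet e (z i) = hmeet e (z' i)) -> hmeet e (G z) = hmeet e (G z')) ->
  (forall z z', (forall i, hle (z i) (z' i)) -> hle (G z') (G z)) ->
  (forall i e h h', hmeet e h = hmeet e h' -> hmeet e (f i h) = hmeet e (f i h')) ->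
  (forall i h h', hle h h' -> hle (f i h') (f i h)) ->
  let F := fun h => G (fun i => f i h) in
  iter n.+2 F (hbot H) = iter n.+1 F (hbot H) /\
  (forall h, F h = h -> hle (iter n.+1 F (hbot H)) h).
Proof.
move=> Gc Ga fc fa F.
have Fm : forall h h', hle h h' -> hle (F h) (F h').
  by move=> h h' hh; apply: Ga => i; apply: fa.
set a := fun k => iter k F (hbot H).
have aS : forall k, a k.+1 = F (a k) by [].
have am : forall k, hle (a k) (a k.+1).
  elim=> [|k ih]; first exact: hbot_le.
  by rewrite aS [a k.+2]aS; apply: Fm.
have amm : forall k l, k <= l -> hle (a k) (a l).
  move=> k l /subnKC <-; elim: (l - k) => [|d ih]; first by rewrite addn0; apply: hle_refl.
  by rewrite addnS; apply: hle_trans ih (am _).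
have L : forall d (S : {set 'I_n}) k e, #|S| + d = n -> d < k ->
    (forall j, j \in S -> hle e (f j (a k))) -> hle (hmeet e (a k.+1)) (a k).
  elim=> [|d ih] S k e hS hk he.
  - have he' : forall j, hle e (f j (a k)).
      move=> j; case: (boolP (j \in S)) => [/he //|jS].
      have := max_card (mem (j |: S)); rewrite cardsU1 jS card_ord => h.
      by move: h; rewrite -[X in _ <= X]hS addn0 add1n ltnn.
    have -> : hmeet e (a k.+1) = hmeet e (G (fun _ => htop H)).
      rewrite aS; apply: Gc => i; apply: meq.
      - exact: hle_top.
      - exact: (hle_trans (mle_l _ _) (he' i)).
    apply: (hle_trans (mle_r _ _)).
    apply: (hle_trans _ (amm 1 k hk)).
    by apply: Ga => i; apply: hle_top.
  - case: k hk he => [//|k] hk he.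
    have hi : forall i, hle (hmeet e (f i (a k))) (f i (a k.+1)).
      move=> i; case: (boolP (i \in S)) => [/he hei|iS].
        exact: (hle_trans (mle_l _ _) hei).
      set e' := hmeet e (f i (a k)).
      have he' : forall j, j \in i |: S -> hle e' (f j (a k)).
        move=> j; rewrite in_setU1 => /orP [/eqP -> | jS]; first exact: mle_r.
        apply: (hle_trans (mle_l _ _)); apply: (hle_trans (he j jS)).
        by apply: fa; apply: am.
      have := ih (i |: S) k e'; rewrite cardsU1 iS add1n addSnnS => /(_ hS hk he') hle1.
      have eqa : hmeet e' (a k.+1) = hmeet e' (a k).
        apply: meq => //; apply: (hle_trans (mle_r _ _)); exact: am.
      have := fc i _ _ _ eqa.
      have -> : hmeet e' (f i (a k)) = e'.
        apply: hle_anti; first exact: mle_l.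
        apply: mglb; [exact: hle_refl|exact: mle_r].
      move=> eq2; rewrite -eq2; exact: mle_r.
    have : hmeet e (a k.+2) = hmeet e (a k.+1).
      rewrite [a k.+2]aS [a k.+1]aS; apply: Gc => i; apply: meq.
      - apply: (hle_trans (mle_r _ _)); apply: fa; exact: am.
      - exact: hi.
    move=> ->; exact: mle_r.
have key := L n set0 n.+1 (htop H); rewrite cards0 in key.
move: key => /(_ erefl (ltnSn n)) key.
have key' : hle (a n.+2) (a n.+1).
  apply: (hle_trans _ (key _)); last by move=> j; rewrite in_set0.
  apply: mglb; [exact: hle_top|exact: hle_refl].
split; first by apply: hle_anti; [exact: key'|exact: (am n.+1)].
move=> h Fh.
have : forall k, hle (a k) h.
  elim=> [|k ih]; first exact: hbot_le.
  by rewrite aS -Fh; apply: Fm.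
by move=> /(_ n.+1).
Qed.

Definition valz (H : heyting) (v : nat -> H) n (y : 'I_n -> nat) (z : 'I_n -> H) : nat -> H :=
  fun w => match [pick i | y i == w] with Some i => z i | None => v w end.

Lemma subst_eval (H : heyting) (v : nat -> H) (x : nat) (h : H) n (y : 'I_n -> nat)
  (psi : 'I_n -> form) (f0 : form) :
  (forall p, ~~ occ p x f0) ->
  eval (upd v x h) (subst y psi f0) =
  eval (valz v y (fun i => eval (upd v x h) (psi i))) f0.
Proof.
elim: f0 => /= [z|||a iha b ihb|a iha b ihb|a iha b ihb] hn.
- rewrite /valz; case: pickP => // _.
  have := hn true; rewrite /upd /= => /negbTE -> //.
- by [].
- by [].
- rewrite iha ?ihb // => p; have := hn p; rewrite negb_or => /andP [] //.
- rewrite iha ?ihb // => p; have := hn p; rewrite negb_or => /andP [] //.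
- rewrite ihb; last by move=> p; have := hn p; rewrite negb_or => /andP [].
  rewrite iha // => p; have := hn (~~ p); rewrite negb_or negbK => /andP [] //.
Qed.

Theorem mainTheorem17 (n : nat) (x : nat) (y : 'I_n -> nat)
  (psi0 : form) (psi : 'I_n -> form) :
  injective y ->
  ~~ occurs x psi0 ->
  (forall i, negative (y i) psi0) ->
  (forall i, negative x (psi i)) ->
  forall (H : heyting) (v : nat -> H),
  let F := fun h : H => eval (upd v x h) (subst y psi psi0) in
  iter n.+2 F (hbot H) = iter n.+1 F (hbot H) /\
  (forall h, F h = h -> hle (iter n.+1 F (hbot H)) h).
Proof.
move=> _ hx hy hpsi H v F.
have hx' : forall p, ~~ occ p x psi0.
  move: hx; rewrite /occurs negb_or => /andP [h1 h2] [] //.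
set G := fun z : 'I_n -> H => eval (valz v y z) psi0.
set f := fun (i : 'I_n) (h : H) => eval (upd v x h) (psi i).
have eF : F =1 (fun h => G (fun i => f i h)).
  by move=> h; rewrite /F subst_eval.
have := @abstract_fix H n G f.
have -> : iter n.+2 F (hbot H) = iter n.+2 (fun h => G (fun i => f i h)) (hbot H)
  by apply: eq_iter.
have -> : iter n.+1 F (hbot H) = iter n.+1 (fun h => G (fun i => f i h)) (hbot H)
  by apply: eq_iter.
move=> P; have [] := P.
- move=> e z z' hz; apply: eval_compat => w; rewrite /valz; case: pickP => // *.
- move=> z z' hz; apply: eval_mono => w hw; rewrite /valz; case: pickP.
  + move=> i /eqP ei; by have := hy i; rewrite /negative ei hw.
  + move=> _; exact: hle_refl.
  + move=> i _; exact: hz.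
  + move=> _; exact: hle_refl.
- move=> i e h h' eh; apply: eval_compat => w; rewrite /upd; by case: (w == x).
- move=> i h h' hh; apply: eval_mono => w hw; rewrite /upd; case: eqP.
  + move=> ew; by have := hpsi i; rewrite /negative -ew hw.
  + move=> _; exact: hle_refl.
  + move=> _; exact: hh.
  + move=> _; exact: hle_refl.
- move=> e1 e2; split => // h Fh; apply: e2; by rewrite -eF.
Qed.
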